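(* Let $A,B>0$, $Q=A/B$, $rec$ real, $\epsilon_0 = 1-B\cdot rec$, let $k\ge1$ and let $n_i,d_i,f_i$ be real numbers. Define $N_0 = A\cdot rec - n_0$, $D_0 = B\cdot rec - d_0$, $F_i = 2-D_i-f_i$, and for $i\ge1$: $N_i = N_{i-1}F_{i-1}-n_i$, $D_i = D_{i-1}F_{i-1}-d_i$. Define $\epsilon'_0 = \epsilon_0+d_0$ and $\epsilon'_i = (\epsilon'_{i-1})^2 + (1-\epsilon'_{i-1})f_{i-1} + d_i$ for $i\ge1$. Then for all $i\ge0$, $D_i = 1-\epsilon'_i$, $F_i = 1+\epsilon'_i - f_i$, and $$N_i = Q(1-\epsilon'_i) + \sum_{j=0}^{i}(Qd_j - n_j)\prod_{l=j}^{i-1}F_l .$$ In particular the final numerator satisfies $$N_k = Q\bigl(1-(\epsilon'_{k-1})^2\bigr) - Qf_{k-1}(1-\epsilon'_{k-1}) + \sum_{j=0}^{k-1}(Qd_j-n_j)\prod_{l=j}^{k-1}F_l \;-\; n_k,$$ so that $N_k - Q$ equals the convergent error term $-Q(\epsilon'_{k-1})^2$ plus the accumulative error term $\sum_{j=0}^{k-1}(Qd_j-n_j)\prod_{l=j}^{k-1}F_l - n_k - Qf_{k-1}(1-\epsilon'_{k-1})$. (Empty products equal $1$.)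
   Context: Goldschmidt division of $Q=A/B$ with $k$ iterations in which numerator, denominator and iterative factor are all computed inexactly: $n_i$, $d_i$, $f_i$ are the errors (truncation errors, nonnegative in the paper) on $N_i$, $D_i$, $F_i$ respectively, and $rec$ is an approximate reciprocal of $B$ with relative error $\epsilon_0$. *)

(* Defs.v *)
From mathcomp Require Import all_boot all_order all_algebra.
Set Implicit Arguments. Unset Strict Implicit. Unset Printing Implicit Defensive.
Import Order.TTheory GRing.Theory Num.Theory.
Local Open Scope ring_scope.

(* Goldschmidt division with inexact numerator/denominator/factor.
   n, d, f : nat -> R are the errors n_i, d_i, f_i on N_i, D_i, F_i. *)
Section Goldschmidt.
Variables (R : realFieldType) (A B rec : R) (n d f : nat -> R).

Fixpoint gs_D (i : nat) : R :=
  match i with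
  | 0 => B * rec - d 0
  | i'.+1 => gs_D i' * (2 - gs_D i' - f i') - d i
  end.

Definition gs_F (i : nat) : R := 2 - gs_D i - f i.

Fixpoint gs_N (i : nat) : R :=
  match i with
  | 0 => A * rec - n 0
  | i'.+1 => gs_N i' * gs_F i' - n i
  end.

Definition gs_eps0 : R := 1 - B * rec.

Fixpoint gs_epsp (i : nat) : R :=
  match i with
  | 0 => gs_eps0 + d 0
  | i'.+1 => gs_epsp i' ^+ 2 + (1 - gs_epsp i') * f i' + d i
  end.

End Goldschmidt.

(* Main.v *)
Require Import Defs.
From mathcomp Require Import all_boot all_order all_algebra.
From mathcomp Require Import ring.
Import Order.TTheory GRing.Theory Num.Theory.
Local Open Scope ring_scope.

Lemma aux (R : comRingType) (q x y z S : R) :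
  q * (1 - x ^+ 2) - q * y * (1 - x) + S - z - q =
  - q * x ^+ 2 + (S - z - q * y * (1 - x)).
Proof. ring. Qed.

Theorem mainTheorem6 (R : realFieldType) (A B rec : R) (n d f : nat -> R)
    (k : nat) (hA : 0 < A) (hB : 0 < B) (hk : (1 <= k)%N) :
  let Q := A / B in
  let D := gs_D B rec d f in
  let F := gs_F B rec d f in
  let N := gs_N A B rec n d f in
  let e := gs_epsp B rec d f in
  (forall i : nat,
      D i = 1 - e i
   /\ F i = 1 + e i - f i
   /\ N i = Q * (1 - e i)
            + \sum_(0 <= j < i.+1) (Q * d j - n j) * \prod_(j <= l < i) F l)
  /\ N k = Q * (1 - e k.-1 ^+ 2) - Q * f k.-1 * (1 - e k.-1)
           + \sum_(0 <= j < k) (Q * d j - n j) * \prod_(j <= l < k) F l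
           - n k
  /\ N k - Q = - Q * e k.-1 ^+ 2
           + (\sum_(0 <= j < k) (Q * d j - n j) * \prod_(j <= l < k) F l
              - n k - Q * f k.-1 * (1 - e k.-1)).
Proof.
move=> Q D F N e.
have hB0 : B != 0 by rewrite gt_eqF.
have QB : Q * B = A by rewrite /Q divfK.
have sumS : forall i, \sum_(0 <= j < i.+1) (Q * d j - n j) * \prod_(j <= l < i.+1) F l
   = (\sum_(0 <= j < i.+1) (Q * d j - n j) * \prod_(j <= l < i) F l) * F i.
  move=> i; rewrite big_distrl /=; apply: eq_big_nat => j /andP [_ hj].
  by rewrite big_nat_recr //= mulrA.
have DF : forall i, D i = 1 - e i /\ F i = 1 + e i - f i.
  elim=> [|i [IHD IHF]].
    rewrite /D /e /= /gs_eps0; split; first by ring.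
    by rewrite /F /gs_F /=; ring.
  have HD : D i.+1 = 1 - e i.+1.
    rewrite /D /e /=; rewrite -/(D i) -/(e i) IHD; ring.
  split => //; by rewrite /F /gs_F -/(D i.+1) HD; ring.
have main : forall i, N i = Q * (1 - e i)
            + \sum_(0 <= j < i.+1) (Q * d j - n j) * \prod_(j <= l < i) F l.
  elim=> [|i IH].
    rewrite big_nat1 big_geq // /N /= /e /= /gs_eps0.
    by rewrite -[in LHS]QB; ring.
  rewrite /N /= -/(N i) -/(F i) IH.
  have E1 : \sum_(0 <= j < i.+2) (Q * d j - n j) * \prod_(j <= l < i.+1) F l
     = (\sum_(0 <= j < i.+1) (Q * d j - n j) * \prod_(j <= l < i) F l) * F i
       + (Q * d i.+1 - n i.+1).
    by rewrite big_nat_recr //= sumS big_geq // mulr1.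
  rewrite E1.
  have [HD HF] := DF i.
  rewrite HF /e /=; rewrite -/(e i); ring.
split; first by move=> i; have [? ?] := DF i; split=> //; split=> //; exact: main.
case: k hk => [//|m] _.
have HN : N m.+1 = Q * (1 - e m ^+ 2) - Q * f m * (1 - e m) +
  \sum_(0 <= j < m.+1) (Q * d j - n j) * \prod_(j <= l < m.+1) F l - n m.+1.
  rewrite /N /= -/(N m) -/(F m) main sumS.
  have [_ HF] := DF m; rewrite HF; ring.
have -> : m.+1.-1 = m by [].
rewrite HN; split=> //.
set S := \sum_(0 <= j < m.+1) _.
exact: aux.
Qed.
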